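(* Let $G$ be a finite group, $H\trianglelefteq G$ a normal subgroup and $g,h\in G$. Then (i) $\eta_g(\eta_g(H))=\eta_g(H)$; (ii) $\eta_{gh}(H)\le\eta_g(H)\eta_h(H)$; (iii) $\mathrm{FitL}(\eta_{gh}(H))\le\max\{\mathrm{FitL}(\eta_g(H)),\mathrm{FitL}(\eta_h(H))\}$.
   Context: Commutators: $[x,y]=x^{-1}y^{-1}xy$, $x^y=y^{-1}xy$; for subsets $X,Y\subseteq G$, $[X,Y]$ is the subgroup generated by all $[x,y]$, and $[X,{}_kY]=[\cdots[[X,Y],Y]\cdots,Y]$ with $k$ copies of $Y$. $g^G=\{g^x:x\in G\}$. Fix $M\in\mathbb{N}$ such that $[X,{}_MY]=[X,{}_iY]$ for all $i\ge M$ and all $X,Y\subseteq G$ with $X^G=X$, $Y^G=Y$. For $H\trianglelefteq G$ and $g\in G$, $\eta_g(H)=[H,{}_M\,g^G]$ (a normal subgroup of $G$ contained in $H$). $\mathrm{FitL}(A)$ denotes the Fitting length of a finite group $A$: the least $d$ such that there is a series $1=A_0\trianglelefteq\cdots\trianglelefteq A_d=A$ with nilpotent quotients (taken as $\infty$ if no such series exists). *)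

(* Defs.v *)
From mathcomp Require Import all_boot all_fingroup all_solvable.
Set Implicit Arguments. Unset Strict Implicit. Unset Printing Implicit Defensive.
Local Open Scope group_scope.

(* X^G = X for the whole finite group gT (the paper's G). *)
Definition conj_closed (gT : finGroupType) (X : {set gT}) : Prop :=
  class_support X [set: gT] = X.

Definition iter_comm (gT : finGroupType) (X Y : {set gT}) (k : nat) : {set gT} :=
  iter k (fun Z => [~: Z, Y]) X.

Definition stable_exponent (gT : finGroupType) (M : nat) : Prop :=
  forall X Y : {set gT}, conj_closed X -> conj_closed Y ->
    forall i, M <= i -> iter_comm X Y M = iter_comm X Y i.

Definition eta (gT : finGroupType) (M : nat) (g : gT) (H : {set gT}) : {set gT} :=
  iter_comm H (g ^: [set: gT]) M.

Definition fit_series (gT : finGroupType) (E : {set gT}) (d : nat) : Prop :=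
  exists A : nat -> {group gT},
    [/\ (A 0 :==: 1), (A d :==: E) &
        forall i, i < d -> (A i <| A i.+1) /\ nilpotent (A i.+1 / A i)].

(* FitL(E) <= d  (FitL(E) = infinity if no such series exists). *)
Definition FitL_le (gT : finGroupType) (E : {set gT}) (d : nat) : Prop :=
  exists2 d', d' <= d & fit_series E d'.

(* Main.v *)
Require Import Defs.
From mathcomp Require Import all_boot all_fingroup all_solvable.
Set Implicit Arguments. Unset Strict Implicit. Unset Printing Implicit Defensive.
Local Open Scope group_scope.

Section Helpers.
Variable gT : finGroupType.
Implicit Types (A B C K L N E : {group gT}) (X Y Z : {set gT}).
Local Notation T := [set: gT].

Definition icG A Y n : {group gT} := iter n (fun B : {group gT} => [~: B, Y]%G) A.

Lemma icGE A Y n : icG A Y n = iter_comm A Y n :> {set gT}.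
Proof. elim: n => //= n IH; rewrite IH. by []. Qed.

Lemma icGS A Y n : icG A Y n.+1 = icG [~: A, Y]%G Y n.
Proof. by rewrite /icG iterSr. Qed.

Lemma icG_norm A Y n : T \subset 'N(A) -> T \subset 'N(Y) -> T \subset 'N(icG A Y n).
Proof. move=> nA nY; elim: n => //= n IH; exact: normsR. Qed.

Lemma icG_sub A Y n : T \subset 'N(A) -> T \subset 'N(Y) -> icG A Y n \subset A.
Proof.
move=> nA nY; elim: n => // n IH /=.
apply: subset_trans IH; apply: subset_trans (commgS _ (subsetT Y)) _.
by rewrite (commg_subl _ [set: gT]%G) icG_norm.
Qed.

Lemma commT_sub A Y : T \subset 'N(A) -> [~: A, Y] \subset A.
Proof.
move=> nA; apply: subset_trans (commgS _ (subsetT Y)) _.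
by rewrite (commg_subl _ [set: gT]%G).
Qed.

Lemma icG_mono A B Y n : A \subset B -> icG A Y n \subset icG B Y n.
Proof. move=> sAB; elim: n => //= n IH; exact: commSg. Qed.

Lemma comm_mulL X1 X2 Z K : T \subset 'N(K) ->
  [~: X1, Z] \subset K -> [~: X2, Z] \subset K -> [~: X1 * X2, Z] \subset K.
Proof.
move=> nK s1 s2; rewrite gen_subG; apply/subsetP=> _ /imset2P[x z /mulsgP[a b Xa Xb ->] Zz ->].
rewrite commMgJ groupM //.
  rewrite memJ_norm; first exact: (subsetP s1) (mem_commg Xa Zz).
  exact: (subsetP nK) (in_setT b).
exact: (subsetP s2) (mem_commg Xb Zz).
Qed.

Lemma comm_mulR A X1 X2 Z K : T \subset 'N(K) -> Z \subset X1 * X2 ->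
  [~: A, X1] \subset K -> [~: A, X2] \subset K -> [~: A, Z] \subset K.
Proof.
move=> nK sZ s1 s2; rewrite gen_subG; apply/subsetP=> _ /imset2P[a z Aa Zz ->].
have /mulsgP[x y Xx Xy ->] := subsetP sZ z Zz.
rewrite commgMJ groupM //.
  exact: (subsetP s2) (mem_commg Aa Xy).
rewrite memJ_norm; first exact: (subsetP s1) (mem_commg Aa Xx).
exact: (subsetP nK) (in_setT y).
Qed.

Lemma icG_prod B C Z n : T \subset 'N(B) -> T \subset 'N(C) -> T \subset 'N(Z) ->
  icG (B <*> C) Z n \subset icG B Z n * icG C Z n.
Proof.
move=> nB nC nZ; have nCB : C \subset 'N(B) := subset_trans (subsetT _) nB.
elim: n => [|n IH]; first by rewrite /= norm_joinEr.
have nn : icG C Z n.+1 \subset 'N(icG B Z n.+1).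
  apply: subset_trans (subsetT _) _; exact: icG_norm.
rewrite -(norm_joinEr nn) /=.
apply: subset_trans (commSg _ IH) _.
apply: comm_mulL.
- by apply: normsY; apply: normsR => //; apply: icG_norm.
- exact: joing_subl.
- exact: joing_subr.
Qed.

Lemma key X Y Z N : T \subset 'N(X) -> T \subset 'N(Y) -> T \subset 'N(Z) ->
  Z \subset X * Y -> forall n a b A, (a + b <= n)%N -> T \subset 'N(A) ->
  icG A X a \subset N -> icG A Y b \subset N -> icG A Z (a + b) \subset N.
Proof.
move=> nX nY nZ sZ; elim=> [|n IH] a b A hab nA sX sY.
  move: hab sX sY; rewrite leqn0 addn_eq0 => /andP[/eqP-> /eqP->] sX sY.
  apply: subset_trans (icG_sub _ nA nZ) _; exact: sX.
case: a hab sX => [|a] hab sX.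
  apply: subset_trans (icG_sub _ nA nZ) _; exact: sX.
case: b hab sY => [|b] hab sY.
  by rewrite addn0; apply: subset_trans (icG_sub _ nA nZ) _; exact: sY.
have nAX : T \subset 'N([~: A, X]) by apply: normsR.
have nAY : T \subset 'N([~: A, Y]) by apply: normsR.
have sAZ : [~: A, Z] \subset [~: A, X] <*> [~: A, Y].
  apply: comm_mulR sZ _ _ => //; first by apply: normsY.
  - exact: joing_subl.
  - exact: joing_subr.
rewrite -/(icG A Z (a.+1 + b.+1)) addSn icGS.
apply: subset_trans (icG_mono _ _ sAZ) _.
apply: subset_trans (icG_prod _ nAX nAY nZ) _.
rewrite mul_subG //.
  apply: (IH a b.+1) => //; first by rewrite -icGS.
  apply: subset_trans sY; apply: icG_mono.
  exact: commT_sub.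
rewrite -addSnnS; apply: (IH a.+1 b) => //; first by rewrite addSnnS.
  apply: subset_trans sX; apply: icG_mono.
  exact: commT_sub.
by rewrite -icGS.
Qed.

Lemma cc_norm X : T \subset 'N(X) -> conj_closed X.
Proof.
move=> nX; apply/eqP; rewrite /conj_closed eqEsubset sub_class_support andbT.
rewrite class_supportEr; apply/bigcupsP=> x _; by rewrite (normsP nX x (in_setT x)).
Qed.

Lemma class_mul g h : (g * h) ^: T \subset (g ^: T) * (h ^: T).
Proof.
apply/subsetP=> _ /imsetP[t _ ->]; rewrite conjMg.
by apply: mem_mulg; apply: memJ_class; rewrite inE.
Qed.

Definition RG k d (E : {group gT}) : {group gT} :=
  iter d (fun B : {group gT} => ('L_k(B))%G) E.

Lemma RGS k d E : RG k d.+1 E = RG k d ('L_k(E))%G.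
Proof. by rewrite /RG iterSr. Qed.

Lemma RG_sub k d E : RG k d E \subset E.
Proof. elim: d => //= d IH; exact: subset_trans (lcn_sub _ _) IH. Qed.

Lemma RG_monoE k d A B : A \subset B -> RG k d A \subset RG k d B.
Proof. move=> sAB; elim: d => //= d IH; exact: lcnS. Qed.

Lemma RG_monok k k' d E : (k <= k')%N -> RG k' d E \subset RG k d E.
Proof.
move=> kk; elim: d => //= d IH.
apply: subset_trans (lcnS _ IH) _; exact: lcn_sub_leq.
Qed.

Lemma RG_le k d d' E : (d' <= d)%N -> RG k d E \subset RG k d' E.
Proof.
move=> dd; rewrite -(subnK dd) /RG iterD; exact: RG_sub.
Qed.

Lemma RG_normal k d E : E <| T -> RG k d E <| T.
Proof. move=> nE; elim: d => //= d IH; exact: char_normal_trans (lcn_char _ _) IH. Qed.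

Lemma nil_lcn A B : A <| B -> nilpotent (B / A) -> exists n, 'L_n.+1(B) \subset A.
Proof.
move=> /andP[sAB nAB] /lcnP[n hn]; exists n.
have sL : 'L_n.+1(B) \subset 'N(A) := subset_trans (lcn_sub _ _) nAB.
rewrite -(quotient_sub1 sL) /quotient morphim_lcn //.
by rewrite -[coset A @* B]/(B / A) hn.
Qed.

Lemma F1 (S : {set gT}) d : fit_series S d -> forall G : {group gT}, gval G = S ->
  exists k, RG k.+1 d G \subset [1 gT].
Proof.
move=> [A [/eqP A0 /eqP Ad hA]] G GS.
have -> : G = A d by apply: val_inj; rewrite /= GS Ad.
have : (d <= d)%N by [].
elim: {1 3 4}d => [|i IH] lei.
  by exists 0; rewrite /RG /= A0.
have [k hk] := IH (ltnW lei).
have [nA nilA] := hA i lei.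
have [n hn] := nil_lcn nA nilA.
exists (maxn k n); rewrite RGS.
apply: subset_trans (RG_monoE _ _ _) _; last first.
  apply: subset_trans (RG_monok _ _ _) hk; exact: leq_maxl.
apply: subset_trans hn; apply: lcn_sub_leq; rewrite ltnS; exact: leq_maxr.
Qed.

Lemma F2 k d E : RG k.+1 d E \subset [1 gT] -> fit_series E d.
Proof.
move=> h1; exists (fun i => RG k.+1 (d - i) E); split.
- by rewrite subn0 eqEsubset h1 sub1G.
- by rewrite subnn.
move=> i lti; rewrite -(subnSK lti) RGS -/(RG _ _ _).
set B := RG k.+1 (d - i.+1) E.
have -> : RG k.+1 (d - i.+1) ('L_k.+1(E))%G = ('L_k.+1(B))%G.
  by rewrite /B -RGS -[RG _ _.+1 _]/(('L_k.+1(RG k.+1 (d - i.+1) E))%G).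
split; first exact: lcn_normal.
apply/lcnP; exists k.
rewrite /quotient -morphim_lcn ?lcn_norm //.
by rewrite -[coset _ @* _]/('L_k.+1(B) / 'L_k.+1(B)) trivg_quotient.
Qed.

Lemma F3 k K L : T \subset 'N(K) -> T \subset 'N(L) ->
  'L_(k + k.+2).+1(K <*> L) \subset 'L_k.+1(K) <*> 'L_k.+1(L).
Proof.
move=> nK nL.
have nLK : L \subset 'N(K) := subset_trans (subsetT _) nK.
have nKL : K \subset 'N(L) := subset_trans (subsetT _) nL.
have nJ : T \subset 'N(K <*> L) by apply: normsY.
have lE : forall n (B : {group gT}), 'L_n.+1(B) = icG B B n :> {set gT}.
  by move=> n B; rewrite lcnE icGE.
rewrite -addSnnS (lE _ (K <*> L)%G).
apply: (key nK nL nJ _ (leqnn _) nJ).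
- by rewrite norm_joinEr.
- rewrite icGS.
  have s1 : [~: K <*> L, K]%G \subset K by rewrite /= commg_subr join_subG normG nLK.
  apply: subset_trans (icG_mono K k s1) _.
  rewrite -lE; exact: joing_subl.
- rewrite icGS.
  have s1 : [~: K <*> L, L]%G \subset L by rewrite /= commg_subr join_subG normG nKL.
  apply: subset_trans (icG_mono L k s1) _.
  rewrite -lE; exact: joing_subr.
Qed.

Lemma RG_join k d K L : K <| T -> L <| T ->
  RG (k + k.+2).+1 d (K <*> L)%G \subset RG k.+1 d K <*> RG k.+1 d L.
Proof.
move=> nK nL; elim: d => [|d IH] //=.
apply: subset_trans (lcnS _ IH) _.
by apply: F3; apply: normal_norm; apply: RG_normal.
Qed.
End Helpers.

Theorem lemma4p1 (gT : finGroupType) (M : nat) (hM : stable_exponent gT M)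
  (H : {group gT}) (hH : H <| [set: gT]) (g h : gT) :
  [/\ eta M g (eta M g H) = eta M g H,
      eta M (g * h) H \subset eta M g H * eta M h H &
      forall d : nat, FitL_le (eta M g H) d -> FitL_le (eta M h H) d ->
        FitL_le (eta M (g * h) H) d].
Proof.
have nH : [set: gT] \subset 'N(H) := normal_norm hH.
have nC : forall x : gT, [set: gT] \subset 'N(x ^: [set: gT]) := fun x => class_norm x _.
have stab : forall x n, (M <= n)%N -> icG H (x ^: [set: gT]) n = icG H (x ^: [set: gT]) M :> {set gT}.
  move=> x n Mn; rewrite !icGE; symmetry; apply: hM => //; apply: cc_norm => //.
have etaE : forall x, eta M x H = icG H (x ^: [set: gT]) M by move=> x; rewrite icGE.
set Eg := icG H (g ^: [set: gT]) M.
set Eh := icG H (h ^: [set: gT]) M.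
have nEg : [set: gT] \subset 'N(Eg) by apply: icG_norm.
have nEh : [set: gT] \subset 'N(Eh) by apply: icG_norm.
have EgEh : Eg <*> Eh = Eg * Eh :> {set gT}.
  by apply: norm_joinEr; apply: subset_trans (subsetT _) nEg.
have part2 : icG H ((g * h) ^: [set: gT]) M \subset Eg <*> Eh.
  rewrite -(stab _ (M + M)%N) ?leq_addr //.
  apply: (key (nC g) (nC h) (nC (g * h)) (class_mul g h) (leqnn _) nH).
  - exact: joing_subl.
  - exact: joing_subr.
split.
- rewrite etaE /eta icGE /iter_comm -iterD -/(iter_comm H _ (M + M)).
  by symmetry; apply: hM; rewrite ?leq_addr //; apply: cc_norm.
- by rewrite !etaE -EgEh.
move=> d [d1 le1 f1] [d2 le2 f2].
have [k1 h1] := F1 f1 (esym (etaE g)).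
have [k2 h2] := F1 f2 (esym (etaE h)).
set k := maxn k1 k2.
have hg : RG k.+1 d Eg \subset [1 gT].
  apply: subset_trans (RG_le _ _ le1) _.
  by apply: subset_trans (RG_monok _ _ _) h1; rewrite ltnS leq_maxl.
have hh : RG k.+1 d Eh \subset [1 gT].
  apply: subset_trans (RG_le _ _ le2) _.
  by apply: subset_trans (RG_monok _ _ _) h2; rewrite ltnS leq_maxr.
exists d => //; rewrite etaE; apply: (@F2 _ (k + k.+2)).
apply: subset_trans (RG_monoE _ _ part2) _.
apply: subset_trans (RG_join _ _ _ _) _.
- by rewrite /normal subsetT.
- by rewrite /normal subsetT.
by rewrite join_subG hg hh.
Qed.
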